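(* There exists a function $f(n,w,d)$ such that for all positive integers $n,w,d$ the following holds. Let $G$ be a connected graph with $\Delta(G)\leq d$ and let $(T,\mathcal{Y})$ be a lean tree-decomposition of $G$ of width at most $w$. If $|V(G)|\geq f(n,w,d)$, then $T$ contains a path $P$ with interior vertices $t_1,\ldots,t_n$, occurring along $P$ in this order, such that: (i) for some positive integer $s\leq w+1$, $|Y_{t_i}|=s$ for all $i\in[n]$ and $|Y_t|\geq s$ for every vertex $t$ of $P$ between $t_1$ and $t_n$; and (ii) there is a set $U\subseteq V(G)$ with $Y_{t_i}\cap Y_{t_j}=U$ for all distinct $i,j\in[n]$.
   Context: All graphs are finite and loopless but may have parallel edges; $[n]=\{1,\dots,n\}$. A tree-decomposition of $G$ is a pair $(T,\mathcal{Y})$ where $T$ is a tree and $\mathcal{Y}=\{Y_t\}_{t\in V(T)}$ is a family of subsets of $V(G)$ (bags) such that (W1) $\bigcup_{t} Y_t=V(G)$ and every edge of $G$ has both ends in some $Y_t$; and (W2) if $t'$ lies on the path of $T$ between $t$ and $t''$ then $Y_t\cap Y_{t''}\subseteq Y_{t'}$. Its width is $\max_t(|Y_t|-1)$. It is lean if additionally: (W3) for every two vertices $t,t'$ of $T$ and every positive integer $k$, either $G$ has $k$ vertex-disjoint paths between $Y_t$ and $Y_{t'}$, or some vertex $t''$ on the path of $T$ between $t$ and $t'$ has $|Y_{t''}|<k$; (W4) distinct vertices $t\ne t'$ of $T$ have $Y_t\neq Y_{t'}$; (W5) if $t_0\in V(T)$ and $B$ is a component of $T-t_0$, then $\bigcup_{t\in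 V(B)}Y_t\setminus Y_{t_0}\neq\emptyset$. *)

(* Defs.v *)
From mathcomp Require Import all_boot.
Set Implicit Arguments. Unset Strict Implicit. Unset Printing Implicit Defensive.

Section Graphs.
Variables (V E : finType) (ends : E -> V * V).

Definition loopless : Prop := forall e, (ends e).1 != (ends e).2.

Definition gdeg (v : V) : nat :=
  #|[set e | ((ends e).1 == v) || ((ends e).2 == v)]|.

Definition max_deg_le (d : nat) : Prop := forall v, gdeg v <= d.

Definition gadj : rel V :=
  fun u v => [exists e, (ends e == (u, v)) || (ends e == (v, u))].

Definition gconnected : Prop := forall u v, connect gadj u v.
End Graphs.

Definition upath (T : eqType) (e : rel T) (x : T) (p : seq T) : bool :=
  path e x p && uniq (x :: p).

Definition disjoint_paths (V E : finType) (ends : E -> V * V)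
  (A B : {set V}) (k : nat) : Prop :=
  exists P : 'I_k -> V * seq V,
    (forall i, [/\ upath (gadj ends) (P i).1 (P i).2,
                   (P i).1 \in A & last (P i).1 (P i).2 \in B]) /\
    (forall i j, i != j -> forall v, v \in (P i).1 :: (P i).2 ->
                                     v \notin (P j).1 :: (P j).2).

Definition is_tree (I : finType) (T : rel I) : Prop :=
  [/\ symmetric T, irreflexive T, (forall x y, connect T x y) &
      (forall x p q, upath T x p -> upath T x q -> last x p = last x q -> p = q)].

Definition on_tpath (I : finType) (T : rel I) (t t' u : I) : Prop :=
  exists p, [/\ upath T t p, last t p = t' & u \in t :: p].

Definition tree_decomp (V E : finType) (ends : E -> V * V)
  (I : finType) (T : rel I) (Y : I -> {set V}) : Prop :=
  [/\ is_tree T,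
      (forall v, exists t, v \in Y t),
      (forall e, exists t, ((ends e).1 \in Y t) && ((ends e).2 \in Y t)) &
      (forall t t' t'', on_tpath T t t'' t' -> Y t :&: Y t'' \subset Y t')].

Definition width_le (I V : finType) (Y : I -> {set V}) (w : nat) : Prop :=
  forall t, #|Y t| <= w.+1.

Definition lean_tree_decomp (V E : finType) (ends : E -> V * V)
  (I : finType) (T : rel I) (Y : I -> {set V}) : Prop :=
  [/\ tree_decomp ends T Y,
      (forall t t' k, 0 < k ->
         disjoint_paths ends (Y t) (Y t') k \/
         exists t'', on_tpath T t t' t'' /\ #|Y t''| < k),
      (forall t t', t != t' -> Y t != Y t') &
      (* W5: every component of T - t0 (the class of some t <> t0 under
         connectivity avoiding t0) has a bag with a vertex outside Y t0 *)
      (forall t0 t, t != t0 ->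
         exists t', connect [rel x y | T x y && (x != t0) && (y != t0)] t t'
                    /\ ~~ (Y t' \subset Y t0))].

(* Main.v *)
Require Import Defs.
From mathcomp Require Import all_boot zify.
Set Implicit Arguments. Unset Strict Implicit. Unset Printing Implicit Defensive.

Lemma runs_lem (P : pred nat) g k : forall lo len,
  count P (iota lo len) <= k -> k.+1 * g.+1 <= len ->
  exists u, [/\ lo <= u, u + g <= lo + len & forall m, u <= m < u + g -> ~~ P m].
Proof.
elim: k => [|k IH] lo len Hc Hl.
  exists lo; split => //; first lia.
  move=> m Hm; have Hlen : len = g + (len - g) by lia.
  move: Hc; rewrite Hlen iotaD count_cat => Hc.
  have H0 : count P (iota lo g) = 0 by lia.
  apply/negP => Pm.
  have : has P (iota lo g) by apply/hasP; exists m => //; rewrite mem_iota.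
  by rewrite has_count H0.
have Hlen : len = g + (len - g) by lia.
move: Hc; rewrite Hlen iotaD count_cat => Hc.
case E: (count P (iota lo g)) => [|c].
  exists lo; split => //; first lia.
  move=> m Hm; apply/negP => Pm.
  have : has P (iota lo g) by apply/hasP; exists m => //; rewrite mem_iota.
  by rewrite has_count E.
have [u [H1 H2 H3]] := IH (lo + g) (len - g) ltac:(lia) ltac:(lia).
exists u; split => //; lia.
Qed.

Fixpoint gA (m0 N : nat) : nat :=
  if m0 is m.+1 then N * (gA m N).+1 else 1.

Lemma lemA (b : nat -> nat) N (HN : 0 < N) : forall m0 c u l,
  gA m0 N <= l -> (forall m, u <= m < u + l -> c < b m <= c + m0) ->
  exists s u' l', [/\ c < s <= c + m0, u <= u', u' + l' <= u + l,
    (forall m, u' <= m < u' + l' -> s <= b m) &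
    N <= count (fun m => b m == s) (iota u' l')].
Proof.
elim => [|m0 IH] c u l Hl Hb.
  have := Hb u ltac:(simpl in Hl; lia). lia.
case: (leqP N (count (fun m => b m == c.+1) (iota u l))) => Hc.
  exists c.+1, u, l; split => //; try lia.
  move=> m Hm; have := Hb m Hm; lia.
have [u2 [H1 H2 H3]] := @runs_lem (fun m => b m == c.+1) (gA m0 N) N.-1 u l
   ltac:(lia) ltac:(rewrite prednK //).
have Hb2 : forall m, u2 <= m < u2 + gA m0 N -> c.+1 < b m <= c.+1 + m0.
  move=> m Hm; have := Hb m ltac:(lia); have := H3 m Hm.
  move=> /eqP; lia.
have [s [u' [l' [Hs Hu1 Hu2 Hge Hcnt]]]] := IH c.+1 u2 (gA m0 N) (leqnn _) Hb2.
exists s, u', l'; split => //; lia.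
Qed.

Lemma card_bigcup_le (T I : finType) (A : {pred I}) (F : I -> {set T}) :
  #|\bigcup_(i in A) F i| <= \sum_(i in A) #|F i|.
Proof.
apply: (big_ind2 (fun (X : {set T}) n => #|X| <= n)) => //.
- by rewrite cards0.
- move=> X1 n1 X2 n2 H1 H2; apply: leq_trans (leq_add H1 H2).
  exact: (leq_card_setU X1 X2).1.
Qed.

Fixpoint hS (s n : nat) : nat := if s is s'.+1 then n * s * hS s' n + 1 else 2.

Lemma sunflower (V : finType) M n : forall s (F : 'I_M -> {set V}) (J : {set 'I_M}),
  {in J &, injective F} -> (forall j, j \in J -> #|F j| = s) -> hS s n <= #|J| ->
  exists (K : {set 'I_M}) (U : {set V}), [/\ K \subset J, n <= #|K| &
     forall a b, a \in K -> b \in K -> a != b -> F a :&: F b = U].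
Proof.
elim => [|s IH] F J Finj Fs Hh.
  have /card_gt1P [a [b [Ha Hb Hab]]] : 1 < #|J| by [].
  have EF : F a = F b.
    have := Fs a Ha; have := Fs b Hb.
    by move/eqP; rewrite cards_eq0 => /eqP ->; move/eqP; rewrite cards_eq0 => /eqP ->.
  by move: Hab; rewrite (Finj _ _ Ha Hb EF) eqxx.
pose D := fun Ms : {set 'I_M} => (Ms \subset J) &&
  [forall a in Ms, forall b in Ms, (a != b) ==> [disjoint F a & F b]].
have D0 : D set0.
  apply/andP; split; first exact: sub0set.
  by apply/forallP => a; apply/implyP; rewrite inE.
case: (@arg_maxnP _ set0 D (fun Ms : {set 'I_M} => #|Ms|) D0) => Ms HD Hmax.
move: (HD) => /andP [MsJ /forallP Hdisj].
case: (leqP n #|Ms|) => Hn.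
  exists Ms, set0; split=> // a b Ha Hb Hab.
  have := Hdisj a; rewrite Ha /= => /forallP /(_ b); rewrite Hb Hab /= => Hd.
  by apply/eqP; rewrite setI_eq0.
pose W := \bigcup_(a in Ms) F a.
pose Jv := fun v => [set j in J | v \in F j].
have HW : #|W| <= n * s.+1.
  apply: leq_trans (card_bigcup_le _ _) _.
  rewrite (eq_bigr (fun _ => s.+1)); last by move=> a Ha; apply: Fs; apply: (subsetP MsJ).
  rewrite sum_nat_const; apply: leq_mul => //; exact: ltnW.
have HJ : J \subset \bigcup_(v in W) Jv v.
  apply/subsetP => j Hj.
  have [v [Hv1 Hv2]] : exists v, v \in F j /\ v \in W.
    case Hjm: (j \in Ms).
      have : 0 < #|F j| by rewrite Fs.
      case/card_gt0P => v Hv; exists v; split => //; apply/bigcupP; by exists j.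
    have : ~~ [forall a in Ms, [disjoint F j & F a]].
      apply/negP => /forall_inP Hall.
      have HDj : D (j |: Ms).
        apply/andP; split; first by rewrite subUset sub1set Hj MsJ.
        apply/forallP => a; apply/implyP => Ha; apply/forallP => b; apply/implyP => Hb.
        apply/implyP => Hab; rewrite !inE in Ha Hb.
        case/orP: Ha => [/eqP Ea|Ha]; case/orP: Hb => [/eqP Eb|Hb].
        - by move: Hab; rewrite Ea Eb eqxx.
        - by rewrite Ea; apply: Hall.
        - by rewrite Eb disjoint_sym; apply: Hall.
        - by have := Hdisj a; rewrite Ha /= => /forallP /(_ b); rewrite Hb Hab.
      have := Hmax _ HDj; rewrite cardsU1 Hjm /=; lia.
    case/forall_inPn => a Ha Hnd.
    rewrite -setI_eq0 in Hnd; case/set0Pn: Hnd => v; rewrite inE => /andP [Hv1 Hv2].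
    exists v; split => //; apply/bigcupP; by exists a.
  apply/bigcupP; exists v => //; by rewrite inE Hj Hv1.
have [v [HvW Hv]] : exists v, v \in W /\ hS s n <= #|Jv v|.
  case/boolP: [exists (v | v \in W), hS s n <= #|Jv v|] => [/exists_inP [v Hv1 Hv2] | Hno].
    by exists v.
  exfalso.
  have Hall : forall v, v \in W -> #|Jv v| <= hS s n.
    move=> v Hv; apply: ltnW; rewrite ltnNge; apply/negP => H; apply: (negP Hno).
    by apply/exists_inP; exists v.
  have H1 := subset_leq_card HJ.
  have H2 : #|J| <= n * s.+1 * hS s n.
    apply: leq_trans H1 _; apply: leq_trans (card_bigcup_le _ _) _.
    apply: leq_trans (_ : \sum_(v in W) hS s n <= _).
      by apply: leq_sum.
    by rewrite sum_nat_const; apply: leq_mul.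
  move: Hh H2 => /=; set X := n * s.+1 * hS s n; lia.
have Hi1 : {in Jv v &, injective (fun j => F j :\ v)}.
  move=> a b; rewrite !inE => /andP [Ha Hva] /andP [Hb Hvb] E.
  apply: Finj => //; by rewrite -(setD1K Hva) -(setD1K Hvb) E.
have Hi2 : forall j, j \in Jv v -> #|F j :\ v| = s.
  move=> j; rewrite inE => /andP [Hj Hvj].
  have := cardsD1 v (F j); rewrite Hvj Fs //= => ?; lia.
have [K [U [KJ HnK Hsun]]] := IH (fun j => F j :\ v) (Jv v) Hi1 Hi2 Hv.
exists K, (v |: U); split.
- apply: subset_trans KJ _; apply/subsetP => j; rewrite inE => /andP [] //.
- exact: HnK.
- move=> a b Ha Hb Hab.
  have := subsetP KJ a Ha; rewrite inE => /andP [_ Hva].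
  have := subsetP KJ b Hb; rewrite inE => /andP [_ Hvb].
  rewrite -(Hsun a b Ha Hb Hab); apply/setP => z; rewrite !inE.
  case: (eqVneq z v) => [->|Hz] /=; first by rewrite Hva Hvb.
  by [].
Qed.

Definition Rt (I : finType) (T : rel I) (t : I) : rel I :=
  [rel x y | T x y && (x != t) && (y != t)].

Lemma path_Rt_neq (I : finType) (T : rel I) t a q :
  path (Rt T t) a q -> all (fun v => v != t) q.
Proof.
elim: q a => //= b q IH a /andP [/andP [/andP [_ _] Hb] Hp].
by rewrite Hb (IH b Hp).
Qed.

Lemma path_Rt_T (I : finType) (T : rel I) t a q : path (Rt T t) a q -> path T a q.
Proof. apply: sub_path => x y /= /andP [/andP [] ] //. Qed.

Lemma path_T_Rt (I : finType) (T : rel I) t a q :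
  path T a q -> all (fun v => v != t) (a :: q) -> path (Rt T t) a q.
Proof.
elim: q a => //= b q IH a /andP [Hab Hp] /and3P [Ha Hb Hq].
rewrite /Rt /= Hab Ha Hb /=; apply: IH => //=; by rewrite Hb.
Qed.

Lemma Rt_sym (I : finType) (T : rel I) t : symmetric T -> symmetric (Rt T t).
Proof. move=> Ts x y; rewrite /Rt /= Ts; by case: (x != t); case: (y != t); rewrite ?andbT ?andbF. Qed.

Lemma conn_Rt_neq (I : finType) (T : rel I) t y v :
  y != t -> connect (Rt T t) y v -> v != t.
Proof.
move=> Hy /connectP [p Hp ->].
have := mem_last y p; rewrite inE => /orP [/eqP ->|Hv] //.
by have := path_Rt_neq Hp => /allP /(_ _ Hv).
Qed.

Lemma T1 (I : finType) (T : rel I) t y1 y2 : is_tree T ->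
  T t y1 -> T t y2 -> connect (Rt T t) y1 y2 -> y1 = y2.
Proof.
case=> Ts Ti Tc Tu H1 H2 /connectP [q Hq Hl].
move: Hl; case: (shortenP Hq) => q' Hp Hu _ Hl.
have Hty1 : t != y1 by apply/eqP => E; move: H1; rewrite -E Ti.
have Hty2 : t != y2 by apply/eqP => E; move: H2; rewrite -E Ti.
have := Tu t (y1 :: q') [:: y2].
rewrite /upath /= H1 H2 (path_Rt_T Hp) /= -Hl.
move: Hu => /= /andP [Hy1q Huq].
have Hq' : t \notin q'.
  apply/negP => Ht; have := path_Rt_neq Hp => /allP /(_ _ Ht); by rewrite eqxx.
rewrite !inE negb_or Hty1 Hq' Hty2 Hy1q Huq => /(_ isT isT erefl) [].
done.
Qed.

Lemma T2 (I : finType) (T : rel I) t s : is_tree T ->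
  s != t -> exists2 y, T t y & connect (Rt T t) y s.
Proof.
case=> Ts Ti Tc Tu Hs.
have /connectP [q Hq Hl] := Tc t s.
move: Hl; case: (shortenP Hq) => q' Hp Hu _ Hl.
case: q' Hp Hu Hl => [|y q''] /=; first by move=> _ _ E; move: Hs; rewrite E eqxx.
move=> /andP [Hty Hp] /andP [Ht Hu] Hl.
exists y => //; apply/connectP; exists q'' => //.
apply: path_T_Rt => //; apply/allP => v Hv; apply/eqP => E.
by move: Ht; rewrite -E Hv.
Qed.

Lemma T3 (V I : finType) (T : rel I) (Y : I -> {set V}) t y1 y2 a b u :
  is_tree T ->
  (forall t t' t'', on_tpath T t t'' t' -> Y t :&: Y t'' \subset Y t') ->
  T t y1 -> T t y2 -> y1 != y2 ->
  connect (Rt T t) y1 a -> connect (Rt T t) y2 b -> u \in Y a -> u \in Y b ->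
  u \in Y t.
Proof.
move=> HT W2 H1 H2 Hne Ha Hb Hua Hub.
have HT' := HT; case: HT' => Ts Ti Tc Tu.
have Hy1t : y1 != t by apply/eqP => E; move: H1; rewrite E Ti.
have Hy2t : y2 != t by apply/eqP => E; move: H2; rewrite E Ti.
have Hdisj : forall v, connect (Rt T t) y1 v -> connect (Rt T t) y2 v -> False.
  move=> v C1 C2; apply/negP: Hne; apply/negPn/eqP.
  apply: (T1 HT H1 H2); apply: connect_trans C1 _.
  by rewrite (sym_connect_sym (Rt_sym t Ts)).
have Ha' : connect (Rt T t) a y1 by rewrite (sym_connect_sym (Rt_sym t Ts)).
case/connectP: Ha' => q1 Hq1 Hl1.
move: Hl1; case: (shortenP Hq1) => {Hq1} q1 Hq1 Hu1 _ Hl1.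
case/connectP: Hb => q2 Hq2 Hl2.
move: Hl2; case: (shortenP Hq2) => {Hq2} q2 Hq2 Hu2 _ Hl2.
have C1 : forall v, v \in a :: q1 -> connect (Rt T t) y1 v.
  move=> v Hv; apply: connect_trans Ha _; exact: path_connect Hq1 v Hv.
have C2 : forall v, v \in y2 :: q2 -> connect (Rt T t) y2 v.
  move=> v Hv; exact: path_connect Hq2 v Hv.
have W := W2 a t b.
have Hon : on_tpath T a b t.
  exists (q1 ++ t :: y2 :: q2); split.
  - have Htq : t \notin y2 :: q2.
      apply/negP => /C2 /(conn_Rt_neq Hy2t); by rewrite eqxx.
    have HU : uniq ((a :: q1) ++ (t :: y2 :: q2)).
      rewrite cat_uniq Hu1 andTb; apply/andP; split; last by rewrite cons_uniq Htq.
      apply/hasPn => v; rewrite inE => /orP [/eqP ->|Hv].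
        apply/negP => /C1 /(conn_Rt_neq Hy1t); by rewrite eqxx.
      apply/negP => Hv1; apply: (Hdisj v (C1 v Hv1) (C2 v Hv)).
    rewrite /upath HU andbT cat_path /= -Hl1 (path_Rt_T Hq1) /= (Ts y1 t) H1 H2 /=.
    exact: (path_Rt_T Hq2).
  - by rewrite last_cat /= -Hl2.
  - by rewrite !(inE, mem_cat) eqxx !orbT.
have := subsetP (W2 a t b Hon) u; rewrite inE Hua Hub; by apply.
Qed.

Definition side (V I : finType) (T : rel I) (Y : I -> {set V}) t y v :=
  (v \notin Y t) && [exists a, connect (Rt T t) y a && (v \in Y a)].

Lemma side_unique (V E : finType) (ends : E -> V * V) (I : finType) (T : rel I)
  (Y : I -> {set V}) t y1 y2 v :
  tree_decomp ends T Y -> T t y1 -> T t y2 -> side T Y t y1 v -> side T Y t y2 v -> y1 = y2.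
Proof.
case=> HT _ _ W2 H1 H2 /andP [Hv /existsP [a /andP [Ca Ha]]] /andP [_ /existsP [b /andP [Cb Hb]]].
case: (eqVneq y1 y2) => // Hne; exfalso.
by move: Hv; rewrite (T3 HT W2 H1 H2 Hne Ca Cb Ha Hb).
Qed.

Lemma edge_side (V E : finType) (ends : E -> V * V) (I : finType) (T : rel I)
  (Y : I -> {set V}) t y u v :
  tree_decomp ends T Y -> T t y -> gadj ends u v -> side T Y t y u -> v \notin Y t ->
  side T Y t y v.
Proof.
move=> Htd Hy /existsP [e He] Hsu Hv.
have Htd' := Htd; case: Htd' => HT _ W1b W2.
have [s Hs] := W1b e.
have [Hus Hvs] : u \in Y s /\ v \in Y s.
  case/orP: He => /eqP Ee; rewrite Ee /= in Hs; case/andP: Hs => //.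
have Hst : s != t.
  apply/eqP => Est; move: Hsu; rewrite /side -Est Hus //.
have [y' Hy' Cy'] := T2 HT Hst.
have Hsu' : side T Y t y' u.
  apply/andP; split; first by case/andP: Hsu.
  apply/existsP; exists s; by rewrite Cy' Hus.
have Eyy := side_unique Htd Hy Hy' Hsu Hsu'.
apply/andP; split => //; apply/existsP; exists s; by rewrite Eyy Cy' Hvs.
Qed.

Definition Pc (V E : finType) (ends : E -> V * V) (I : finType) (T : rel I)
  (Y : I -> {set V}) t y e :=
  (((ends e).1 \in Y t) && side T Y t y (ends e).2) ||
  (((ends e).2 \in Y t) && side T Y t y (ends e).1).

Lemma walk_cross (V E : finType) (ends : E -> V * V) (I : finType) (T : rel I)
  (Y : I -> {set V}) t y :
  tree_decomp ends T Y -> T t y -> forall q u,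
  path (gadj ends) u q -> side T Y t y u -> ~~ side T Y t y (last u q) ->
  exists e, Pc ends T Y t y e.
Proof.
move=> Htd Hy; elim => [|v q IH] u /=; first by move=> _ ->.
move=> /andP [Huv Hp] Hsu Hl.
case Hvt: (v \in Y t).
  case/existsP: Huv => e /orP [] /eqP Ee; exists e; rewrite /Pc Ee /= Hvt Hsu //.
  by rewrite orbT.
apply: (IH v Hp _ Hl); apply: (edge_side Htd Hy Huv Hsu); by rewrite Hvt.
Qed.

Lemma deg_bound (V E : finType) (ends : E -> V * V) (I : finType) (T : rel I)
  (Y : I -> {set V}) d w :
  tree_decomp ends T Y ->
  (forall t0 t, t != t0 ->
         exists t', connect [rel x y | T x y && (x != t0) && (y != t0)] t t'
                    /\ ~~ (Y t' \subset Y t0)) ->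
  gconnected ends -> max_deg_le ends d -> width_le Y w ->
  forall t, #|[set y | T t y]| <= (w.+1 * d).+1.
Proof.
move=> Htd W5 Gc Hd Hw t.
have Htd' := Htd; case: Htd' => HT _ _ _.
have HT' := HT; case: HT' => Ts Ti _ _.
set N := [set y | T t y].
case: (leqP #|N| 1) => Hn; first by apply: leq_trans Hn _.
have Hsidev : forall y, T t y -> exists v, side T Y t y v.
  move=> y Hy.
  have Hyt : y != t by apply/eqP => Eyt; move: Hy; rewrite Eyt Ti.
  have [t' [Ct' Hsub]] := W5 t y Hyt.
  case/subsetPn: Hsub => v Hv1 Hv2.
  exists v; apply/andP; split => //; apply/existsP; exists t'; by rewrite Hv1 andbT.
have Hex : forall y, y \in N -> exists e, Pc ends T Y t y e.
  move=> y; rewrite inE => Hy.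
  have [y' [Hy' Hne]] : exists y', T t y' /\ y != y'.
    case/card_gt1P: Hn => a [b [Ha Hb Hab]]; rewrite !inE in Ha Hb.
    case: (eqVneq y a) => [Eya|Hya]; last by exists a.
    exists b; split => //; by rewrite Eya.
  have [v Hv] := Hsidev y Hy.
  have [v' Hv'] := Hsidev y' Hy'.
  have /connectP [q Hq Hl] := Gc v v'.
  apply: (walk_cross Htd Hy Hq Hv); rewrite -Hl.
  apply/negP => Hs; move: Hne; by rewrite (side_unique Htd Hy Hy' Hs Hv') eqxx.
pose g := fun y => [pick e | Pc ends T Y t y e].
have Hg : forall y, y \in N -> exists2 e, g y = Some e & Pc ends T Y t y e.
  move=> y Hy; rewrite /g; case: pickP => [e He|Hno]; first by exists e.
  by have [e He] := Hex y Hy; move: (Hno e); rewrite He.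
have ginj : {in N &, injective g}.
  move=> y1 y2 H1 H2 E12.
  have [e1 Ge1 P1] := Hg y1 H1; have [e2 Ge2 P2] := Hg y2 H2.
  move: E12; rewrite Ge1 Ge2 => [[Ee]]; rewrite -Ee in P2.
  rewrite !inE in H1 H2.
  move: P1 P2; rewrite /Pc /side.
  case E1: ((ends e1).1 \in Y t) => /=; case E2: ((ends e1).2 \in Y t) => //= Hs1 Hs2.
  - apply: (@side_unique _ _ ends _ _ _ _ _ _ (ends e1).2 Htd H1 H2);
      rewrite /side E2 /=; move: Hs1 Hs2; rewrite !orbF //.
  - apply: (@side_unique _ _ ends _ _ _ _ _ _ (ends e1).1 Htd H1 H2);
      rewrite /side E1 /=; move: Hs1 Hs2; rewrite //.
set Es := [set e | ((ends e).1 \in Y t) || ((ends e).2 \in Y t)].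
have H1 : #|N| <= #|Es|.
  rewrite -(card_in_imset ginj) -(card_imset Es (@Some_inj _)).
  apply: subset_leq_card; apply/subsetP => o /imsetP [y Hy ->].
  have [e Ge Pe] := Hg y Hy; rewrite Ge; apply: imset_f.
  rewrite inE; move: Pe; rewrite /Pc; by case/orP => /andP [-> _]; rewrite ?orbT.
have H2 : #|Es| <= \sum_(z in Y t) gdeg ends z.
  apply: leq_trans (card_bigcup_le (mem (Y t)) (fun z => [set e | ((ends e).1 == z) || ((ends e).2 == z)])).
  apply: subset_leq_card; apply/subsetP => e; rewrite inE => /orP [He|He];
    apply/bigcupP; [exists (ends e).1 | exists (ends e).2]; rewrite // inE eqxx ?orbT //.
have H3 : \sum_(z in Y t) gdeg ends z <= #|Y t| * d.
  rewrite -sum_nat_const; apply: leq_sum => z _; exact: Hd.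
have H4 : #|Y t| * d <= w.+1 * d by apply: leq_mul.
lia.
Qed.

Definition stepS (I : finType) (T : rel I) (A : {set I}) : {set I} :=
  \bigcup_(z in A) [set y | T z y].

Lemma walk_S (I : finType) (T : rel I) : forall q (A : {set I}) a,
  a \in A -> path T a q -> last a q \in iter (size q) (stepS T) A.
Proof.
elim => [|b q IH] A a Ha //= /andP [Hab Hp].
rewrite -iterS iterSr; apply: IH => //.
apply/bigcupP; exists a => //; by rewrite inE.
Qed.

Lemma card_S (I : finType) (T : rel I) D x :
  (forall t, #|[set y | T t y]| <= D) -> forall k,
  #|iter k (stepS T) [set x]| <= D ^ k.
Proof.
move=> HD; elim => [|k IH]; first by rewrite /= cards1.
rewrite iterS /stepS; apply: leq_trans (card_bigcup_le _ _) _.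
apply: leq_trans (_ : \sum_(z in iter k (stepS T) [set x]) D <= _).
  by apply: leq_sum => z _; apply: HD.
rewrite sum_nat_const expnS mulnC; exact: leq_mul.
Qed.

Lemma long_path (I : finType) (T : rel I) D L x :
  is_tree T -> (forall t, #|[set y | T t y]| <= D) -> 0 < D ->
  L.+1 * D ^ L < #|I| -> exists p, upath T x p /\ L < size p.
Proof.
case=> _ _ Tc _ HD HD0 Hcard.
pose Big := \bigcup_(k in [set: 'I_L.+1]) iter k (stepS T) [set x].
have HB : #|Big| <= L.+1 * D ^ L.
  apply: leq_trans (card_bigcup_le _ _) _.
  apply: leq_trans (_ : \sum_(k in [set: 'I_L.+1]) D ^ L <= _).
    apply: leq_sum => k _; apply: leq_trans (card_S x HD k) _.
    apply: leq_pexp2l => //; have := ltn_ord k; lia.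
  by rewrite sum_nat_const cardsT card_ord.
have [y Hy] : exists y, y \notin Big.
  apply/existsP; rewrite -negb_forall; apply/negP => /forallP Hall.
  have : #|I| <= #|Big| by rewrite -cardsT; apply: subset_leq_card; apply/subsetP => z _; exact: Hall.
  lia.
have /connectP [q Hq Hl] := Tc x y.
move: Hl; case: (shortenP Hq) => q' Hp Hu _ Hl.
exists q'; split; first by rewrite /upath Hp Hu.
rewrite ltnNge; apply/negP => Hs; apply: (negP Hy).
have Hlt : size q' < L.+1 by lia.
apply/bigcupP; exists (Ordinal Hlt) => //.
rewrite Hl; apply: walk_S => //; exact: set11.
Qed.

Lemma size_le1 (T : eqType) (s : seq T) :
  uniq s -> (forall a b, a \in s -> b \in s -> a = b) -> size s <= 1.
Proof.
case: s => [|a [|b s]] //= /andP [Ha _] H.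
have Eab := H a b; move: Ha; rewrite Eab ?inE ?eqxx ?orbT //.
Qed.

Definition Nn w n := hS w.+1 n.
Definition gg w n := gA w.+1 (Nn w n).
Definition L0 w n := 2 * (gg w n).+1 + 1.
Definition DD w d := (w.+1 * d).+1.
Definition ff n w d := w.+1 * ((L0 w n).+1 * DD w d ^ (L0 w n)) + 1.

Lemma hS_pos s n : 0 < hS s n.
Proof. case: s => //= s; lia. Qed.

Lemma hS_mono s n : 0 < n -> hS s n <= hS s.+1 n.
Proof.
move=> Hn /=; have : 0 < n * s.+1 by rewrite muln_gt0 Hn.
set a := n * s.+1; set b := hS s n => Ha.
have : b <= a * b by rewrite leq_pmull.
lia.
Qed.

Lemma hS_mono' s t n : 0 < n -> s <= t -> hS s n <= hS t n.
Proof.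
move=> Hn; elim: t => [|t IH]; first by rewrite leqn0 => /eqP ->.
rewrite leq_eqVlt => /orP [/eqP ->|Hst] //.
apply: leq_trans (IH Hst) (hS_mono t Hn).
Qed.

Lemma sorted_enum_val M (K : {set 'I_M}) : sorted (relpre val ltn) (enum K).
Proof.
have -> : enum K = [seq i <- enum 'I_M | i \in K] by rewrite enumT.
apply: sorted_filter; first by move=> a b c /=; apply: ltn_trans.
by rewrite -sorted_map val_enum_ord iota_ltn_sorted.
Qed.

Theorem lemma6p4 :
  exists f : nat -> nat -> nat -> nat,
  forall n w d : nat, 0 < n -> 0 < w -> 0 < d ->
  forall (V E : finType) (ends : E -> V * V),
    loopless ends -> gconnected ends -> max_deg_le ends d ->
  forall (I : finType) (T : rel I) (Y : I -> {set V}),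
    lean_tree_decomp ends T Y -> width_le Y w ->
    f n w d <= #|V| ->
    exists (x : I) (p : seq I) (tt : 'I_n -> I) (idx : 'I_n -> nat),
      upath T x p /\
      [/\ (* t_i are interior vertices of the path x :: p, at positions idx i *)
          (forall i, 0 < idx i < size p),
          (forall i, nth x (x :: p) (idx i) = tt i),
          (forall i j : 'I_n, i < j -> idx i < idx j),
          (* (i) *)
          (exists s, [/\ 0 < s <= w.+1,
             (forall i, #|Y (tt i)| = s) &
             (forall (i j : 'I_n) (m : nat), idx i <= m <= idx j ->
                s <= #|Y (nth x (x :: p) m)|)]) &
          (* (ii) *)
          (exists U : {set V}, forall i j, i != j -> Y (tt i) :&: Y (tt j) = U)].
Proof.
exists ff => n w d Hn Hw Hd V E ends Hll Gc Hdeg I T Y [Htd W3 W4 W5] Hwid Hf.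
have Htd' := Htd; case: Htd' => HT W1a W1b W2.
have HVI : #|V| <= w.+1 * #|I|.
  have : #|V| <= #|\bigcup_(t in [set: I]) Y t|.
    rewrite -cardsT; apply: subset_leq_card; apply/subsetP => v _.
    have [t Ht] := W1a v; apply/bigcupP; by exists t.
  move=> H; apply: leq_trans H _; apply: leq_trans (card_bigcup_le _ _) _.
  apply: leq_trans (_ : \sum_(t in [set: I]) w.+1 <= _).
    by apply: leq_sum => t _; apply: Hwid.
  by rewrite sum_nat_const cardsT mulnC.
set L := L0 w n.
set D := DD w d.
have HBI : L.+1 * D ^ L < #|I|.
  rewrite -(ltn_pmul2l (ltn0Sn w)); move: Hf HVI; rewrite /ff -/L -/D.
  set B := L.+1 * D ^ L; lia.
have [x _] : exists x : I, x \in I by apply/card_gt0P; exact: leq_ltn_trans (leq0n _) HBI.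
have HD : forall t, #|[set y | T t y]| <= D.
  exact: (deg_bound Htd W5 Gc Hdeg Hwid).
have [p [Hup HLp]] := long_path x HT HD (ltn0Sn _) HBI.
have Huniq : uniq (x :: p) by case/andP: Hup.
set bb := fun m => #|Y (nth x (x :: p) m)|.
have Hpos_inj : forall m1 m2, m1 < (size p).+1 -> m2 < (size p).+1 ->
    Y (nth x (x :: p) m1) = Y (nth x (x :: p) m2) -> m1 = m2.
  move=> m1 m2 H1 H2 EY; apply/eqP; rewrite -(@nth_uniq _ x (x :: p) m1 m2 H1 H2 Huniq).
  apply/negPn/negP => Hne; move: (W4 _ _ Hne); by rewrite EY eqxx.
have Hz : count (fun m => bb m == 0) (iota 1 (size p - 1)) <= 1.
  rewrite -size_filter; apply: size_le1; first by apply: filter_uniq; apply: iota_uniq.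
  move=> a b; rewrite !mem_filter !mem_iota => /andP [/eqP Ha Ha'] /andP [/eqP Hb Hb'].
  apply: Hpos_inj; try lia.
  by rewrite (cards0_eq Ha) (cards0_eq Hb).
have [u [Hu1 Hu2 Hu3]] := @runs_lem (fun m => bb m == 0) (gg w n) 1 1 (size p - 1) Hz
  ltac:(rewrite /L /L0 in HLp; lia).
have HNn : 0 < Nn w n by apply: hS_pos.
have Hbnd : forall m, u <= m < u + gA w.+1 (Nn w n) -> 0 < bb m <= 0 + w.+1.
  move=> m Hm; have := Hu3 m Hm; rewrite /bb add0n lt0n => -> /=; exact: Hwid.
have [s [u' [l' [Hs Hv1 Hv2 Hge Hcnt]]]] := lemA HNn (leqnn _) Hbnd.
pose M := (size p).+1.
pose F := fun i : 'I_M => Y (nth x (x :: p) i).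
pose J := [set i : 'I_M | (u' <= i < u' + l') && (bb i == s)].
have Finj : {in J &, injective F}.
  move=> i j _ _ EF; apply: val_inj; apply: Hpos_inj => //; exact: ltn_ord.
have Fs : forall j, j \in J -> #|F j| = s.
  by move=> j; rewrite inE => /andP [_ /eqP].
have HJ : hS s n <= #|J|.
  apply: leq_trans (hS_mono' Hn (_ : s <= w.+1)) _; first lia.
  apply: leq_trans Hcnt _.
  have -> : #|J| = count (fun m => (u' <= m < u' + l') && (bb m == s)) (iota 0 M).
    rewrite cardE.
    have -> : enum J = [seq i <- enum 'I_M | i \in J] by rewrite enumT.
    by rewrite size_filter -val_enum_ord count_map; apply: eq_count => i; rewrite /= inE.
  have HM : M = u' + (l' + (M - (u' + l'))) by move: Hu2; rewrite /M /gg; lia.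
  rewrite HM !iotaD !count_cat add0n.
  rewrite (@eq_in_count _ (fun m => (u' <= m < u' + l') && (bb m == s)) (fun m => bb m == s) (iota u' l')); first exact: leq_trans (leq_addr _ _) (leq_addl _ _).
  by move=> m; rewrite mem_iota => ->.
have [K [U [KJ HnK Hsun]]] := sunflower Finj Fs HJ.
pose es := enum K.
have Hes : n <= size es by rewrite /es -cardE.
pose a : 'I_n -> 'I_M := fun i => nth (@ord0 (size p)) es i.
have HaK : forall i, a i \in K.
  move=> i; rewrite -mem_enum; apply: mem_nth; exact: leq_trans (ltn_ord i) Hes.
have HaJ : forall i, a i \in J by move=> i; exact: (subsetP KJ).
have Hord : forall i j : 'I_n, i < j -> nat_of_ord (a i) < nat_of_ord (a j).
  move=> i j Hij.
  have := @sorted_ltn_nth _ (relpre val ltn) _ ord0 es (sorted_enum_val K) i j.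
  apply => //; [move=> ? ? ? /=; exact: ltn_trans | exact: leq_trans (ltn_ord i) Hes | exact: leq_trans (ltn_ord j) Hes].
exists x, p, (fun i => nth x (x :: p) (a i)), (fun i => nat_of_ord (a i)); split => //; split.
- move=> i; have := HaJ i; rewrite inE => /andP [Hr _]; move: Hu2 Hr; rewrite /gg; move: (a i) (size p) => ai sp; lia.
- by [].
- exact: Hord.
- exists s; split => //.
  + by move=> i; have := HaJ i; rewrite inE => /andP [_ /eqP].
  + move=> i j m Hm; apply: Hge.
    have := HaJ i; have := HaJ j; rewrite !inE => /andP [Hj _] /andP [Hi _]; lia.
- exists U => i j Hij; apply: (Hsun (a i) (a j) (HaK i) (HaK j)).
  apply/negP => /eqP Eij; move: Hij; case: (ltngtP i j) => [Hlt|Hgt|Heq].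
  + by have := Hord i j Hlt; rewrite Eij ltnn.
  + by have := Hord j i Hgt; rewrite Eij ltnn.
  + by rewrite (val_inj Heq) eqxx.
Qed.
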